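(* Let $Q=(q_n)_{n\ge1}$ be a basic sequence that is infinite in limit, and suppose there exist constants $M$ and $t$ such that $\nu_{i+1}-\nu_i\le Mi$ for all $i>t$. Then for every $Q$-special sequence $F$ and every real $\psi>1$, $$D_n^*(y_F)<\psi\cdot\sqrt{2\lceil M+1\rceil}\cdot\left(2\lceil M+1\rceil+1\right)\cdot n^{-1/2}$$ for all sufficiently large $n$.
   Context: A basic sequence is a sequence $Q=(q_n)_{n\ge1}$ of integers with $q_n\ge 2$; it is infinite in limit if $q_n\to\infty$. $\mathbb{N}$ denotes the positive integers. For each positive integer $j$ let $\nu_j=\min\{N : q_m\ge 2j^2 \text{ for all } m\ge N\}$. Define $l_1=\max(\nu_2-1,1)$ and, recursively for $i\ge 2$, $l_i=\max\big(\min\{k\in\mathbb{N} : l_1+2l_2+\cdots+(i-1)l_{i-1}+ik\ge \nu_{i+1}-1\},1\big)$. Put $L_i=\sum_{j=1}^i jl_j$ (with $L_0=0$). Let $S_Q=\{(a,b,c)\in\mathbb{N}^3 : b\le l_a,\ c\le a\}$ and $\phi_Q(a,b,c)=L_{a-1}+(b-1)a+c$; $\phi_Q$ is a bijection $S_Q\to\mathbb{N}$. A $Q$-special sequence is a family of integers $F=(F_{(a,b,c)})_{(a,b,c)\in S_Q}$ with $F_{(a,b,1)}=0$ for all $(a,b,1)\in S_Q$ and $\frac{F_{(a,b,c)}}{q_{\phi_Q(a,b,c)}}\in\left[\frac{c-1}{a}-\frac{1}{2a^2},\frac{c-1}{a}+\frac{1}{2a^2}\right]$ for $(a,b,c)\in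 S_Q$ with $c>1$. For such $F$ put $E_{F,n}=F_{\phi_Q^{-1}(n)}$ and let $y_F$ be the sequence $\left(E_{F,n}/q_n\right)_{n=1}^\infty$. For a sequence $w=(w_1,w_2,\dots)$ in $[0,1)$, the star discrepancy is $D_n^*(w)=\sup_{0<\gamma\le1}\left|\frac{\#\{1\le k\le n: w_k\in[0,\gamma)\}}{n}-\gamma\right|$. *)

(* Defs.v *)
From HB Require Import structures.
From mathcomp Require Import all_boot all_order all_algebra.
From mathcomp Require Import all_classical all_reals.
From Stdlib Require Import ClassicalEpsilon.

Set Implicit Arguments.
Unset Strict Implicit.
Unset Printing Implicit Defensive.
Import Order.TTheory GRing.Theory Num.Theory.

Local Open Scope ring_scope.
Local Open Scope classical_set_scope.

(* least natural number satisfying a boolean predicate (0 if none exists) *)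
Definition least (P : pred nat) : nat :=
  match pselect (exists n, P n) with
  | left e => ex_minn e
  | right _ => 0%N
  end.

(* A basic sequence q = (q_n)_{n>=1}; the value q 0 is irrelevant. *)
Definition basic_seq (q : nat -> nat) : Prop := forall n, (0 < n)%N -> (2 <= q n)%N.
Definition infinite_in_limit (q : nat -> nat) : Prop :=
  forall B, exists N, forall n, (N <= n)%N -> (B <= q n)%N.

Definition nu (q : nat -> nat) (j : nat) : nat :=
  least (fun N => `[< (0 < N)%N /\ forall m, (N <= m)%N -> (2 * j ^ 2 <= q m)%N >]).

(* l_i given L_{i-1} = Lprev *)
Definition lstep (q : nat -> nat) (i Lprev : nat) : nat :=
  if i == 1%N then maxn (nu q 2 - 1) 1
  else maxn (least (fun k => (0 < k)%N && (nu q i.+1 - 1 <= Lprev + i * k)%N)) 1.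

Fixpoint Lsum (q : nat -> nat) (i : nat) : nat :=
  match i with
  | 0 => 0%N
  | i'.+1 => (Lsum q i' + i'.+1 * lstep q i'.+1 (Lsum q i'))%N
  end.

Definition l (q : nat -> nat) (i : nat) : nat := lstep q i (Lsum q i.-1).

Definition inSQ (q : nat -> nat) (t : nat * nat * nat) : Prop :=
  let: (a, b, c) := t in
  [/\ (0 < a)%N, (0 < b)%N, (0 < c)%N, (b <= l q a)%N & (c <= a)%N].

Definition phiQ (q : nat -> nat) (t : nat * nat * nat) : nat :=
  let: (a, b, c) := t in (Lsum q a.-1 + b.-1 * a + c)%N.

Definition phiQ_inv (q : nat -> nat) (n : nat) : nat * nat * nat :=
  epsilon (inhabits (0%N, 0%N, 0%N)) (fun t => inSQ q t /\ phiQ q t = n).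

(* Q-special sequences F : S_Q -> Z, represented as functions on triples *)
Definition Q_special (R : realType) (q : nat -> nat) (F : nat * nat * nat -> int) : Prop :=
  forall a b c, inSQ q (a, b, c) ->
    (c = 1%N -> F (a, b, c) = 0) /\
    ((1 < c)%N ->
       let x : R := (F (a, b, c))%:~R / (q (phiQ q (a, b, c)))%:R in
       (c.-1)%:R / a%:R - (2 * a%:R ^+ 2)^-1 <= x <= (c.-1)%:R / a%:R + (2 * a%:R ^+ 2)^-1).

Definition yF (R : realType) (q : nat -> nat) (F : nat * nat * nat -> int) (n : nat) : R :=
  (F (phiQ_inv q n))%:~R / (q n)%:R.

Definition star_discrepancy (R : realType) (w : nat -> R) (n : nat) : R :=
  sup [set r : R | exists2 g : R, 0 < g <= 1 &
        r = `| (\sum_(1 <= k < n.+1) (((0 <= w k)%R && (w k < g)%R) : nat))%:R / n%:R - g| ].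

(* Main.v *)
Require Import Defs.
From HB Require Import structures.
From mathcomp Require Import all_boot all_order all_algebra.
From mathcomp Require Import all_classical all_reals.
From mathcomp Require Import zify ring lra.
From Stdlib Require Import ClassicalEpsilon.
Import Order.TTheory GRing.Theory Num.Theory.

Lemma least_spec (P : pred nat) : (exists n, P n) ->
  P (least P) /\ forall m, P m -> (least P <= m)%N.
Proof.
move=> ex; rewrite /least; case: pselect => [e|ne]; last by [].
by case: ex_minnP.
Qed.

Lemma lstep_ge1 q i L : (1 <= lstep q i L)%N.
Proof. by rewrite /lstep; case: ifP => _; rewrite leq_maxr. Qed.

Lemma LsumS q i : Lsum q i.+1 = (Lsum q i + i.+1 * l q i.+1)%N.
Proof. by []. Qed.

Lemma l_ge1 q i : (1 <= l q i)%N.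
Proof. exact: lstep_ge1. Qed.

Lemma Lsum_mono q i j : (i <= j)%N -> (Lsum q i <= Lsum q j)%N.
Proof.
elim: j => [|j IH]; first by rewrite leqn0 => /eqP ->.
rewrite leq_eqVlt => /orP [/eqP -> //| ]; rewrite ltnS => /IH H.
rewrite LsumS; lia.
Qed.

Lemma Lsum_quad q i : (i * i.+1 <= 2 * Lsum q i)%N.
Proof.
elim: i => [//|i IH]; rewrite LsumS.
have := l_ge1 q i.+1; nia.
Qed.

Lemma Lsum_ge q i : (i <= Lsum q i)%N.
Proof. have := Lsum_quad q i; nia. Qed.

Lemma nu_le_Lsum q i : (nu q i.+2 - 1 <= Lsum q i.+1)%N.
Proof.
rewrite LsumS /l /=.
case: i => [|i]; rewrite /lstep /=.
  rewrite add0n mul1n; exact: leq_maxl.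
set P := (fun k => _).
have [Pl _] : P (least P) /\ forall m, P m -> (least P <= m)%N.
  apply: least_spec; exists (nu q i.+3).+1; rewrite /P /=.
  nia.
move/andP: Pl => [_ H].
have := leq_maxl (least P) 1; nia.
Qed.

Lemma phiQ_range q a b c : inSQ q (a, b, c) ->
  (Lsum q a.-1 < phiQ q (a, b, c) <= Lsum q a)%N.
Proof.
case=> a0 b0 c0 bl ca /=.
case: a a0 bl ca => [//|a] _ bl ca /=; rewrite /l /= in bl.
apply/andP; split.
  by rewrite -addnA -[X in (X < _)%N]addn0 ltn_add2l addn_gt0 c0 orbT.
rewrite -addnA leq_add2l.
have h1 : (b.-1 * a.+1 <= (lstep q a.+1 (Lsum q a)).-1 * a.+1)%N.
  by apply: leq_mul => //; lia.
have h2 := lstep_ge1 q a.+1 (Lsum q a).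
move: (lstep q a.+1 (Lsum q a)) h1 h2 => L h1 h2.
case: L h1 h2 => [//|L] /= h1 _. nia.
Qed.

Lemma phiQ_inj q t1 t2 : inSQ q t1 -> inSQ q t2 -> phiQ q t1 = phiQ q t2 -> t1 = t2.
Proof.
case: t1 => [[a b] c]; case: t2 => [[a' b'] c'] H1 H2 E.
have R1 := @phiQ_range q _ _ _ H1; have R2 := @phiQ_range q _ _ _ H2.
have ea : a = a'.
  case: H1 => a0 _ _ _ _; case: H2 => a0' _ _ _ _.
  apply/eqP; rewrite eqn_leq; apply/andP; split; rewrite leqNgt; apply/negP => lt.
  - have := @Lsum_mono q a' a.-1 ltac:(lia); lia.
  - have := @Lsum_mono q a a'.-1 ltac:(lia); lia.
subst a'.
case: H1 => a0 b0 c0 _ ca; case: H2 => _ b0' c0' _ ca'.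
move: E; rewrite /= => E.
have E2 : ((b.-1) * a + c = (b'.-1) * a + c')%N by lia.
have eb : b = b'.
  apply/eqP; rewrite eqn_leq; apply/andP; split; rewrite leqNgt; apply/negP => lt; nia.
subst b'; have -> : c = c' by lia.
by [].
Qed.

Lemma phiQ_invK q t : inSQ q t -> phiQ_inv q (phiQ q t) = t.
Proof.
move=> H; rewrite /phiQ_inv.
have ex : exists t', inSQ q t' /\ phiQ q t' = phiQ q t by exists t.
have [H1 H2] := epsilon_spec (inhabits (0%N,0%N,0%N)) _ ex.
exact: phiQ_inj H1 H H2.
Qed.
Lemma decomp q n : (0 < n)%N -> exists a b c, inSQ q (a, b, c) /\ n = phiQ q (a, b, c).
Proof.
move=> n0.
have ex : exists A, (n <= Lsum q A)%N by exists n; exact: Lsum_ge.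
case: (ex_minnP ex) => A HA Hmin.
case: A HA Hmin => [|A] HA Hmin; first by move: HA; rewrite /= leqn0 => /eqP E; rewrite E in n0.
have HA' : (Lsum q A < n)%N.
  rewrite ltnNge; apply/negP => /Hmin; lia.
move: HA; rewrite LsumS => HA.
set r := (n - Lsum q A).-1.
have rlt : (r < A.+1 * l q A.+1)%N by rewrite /r; lia.
exists A.+1, (r %/ A.+1).+1, (r %% A.+1).+1; split.
  split => //.
  - by rewrite ltn_divLR // mulnC.
  - by rewrite ltn_pmod.
rewrite /= (divn_eq r A.+1) in rlt *.
rewrite /r in rlt *; lia.
Qed.

Lemma l_bound q j K : (2 <= j)%N -> (1 <= K)%N ->
  (nu q j.+1 <= nu q j + j * K)%N -> (l q j <= K)%N.
Proof.
case: j => [//|[//|i]] _ K1 H.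
rewrite /l /lstep /=.
set P := (fun k => _).
have PK : P K.
  rewrite /P /=; apply/andP; split => //.
  have := nu_le_Lsum q i; have -> : Lsum q i.+1 = (Lsum q i + i.+1 * lstep q i.+1 (Lsum q i))%N by []. move: H; move: (i.+2 * K) => x; lia.
have [_ Hm] := @least_spec P (ex_intro _ K PK).
by rewrite geq_max K1 Hm.
Qed.

Fixpoint SL q m : nat := match m with 0 => 0%N | m'.+1 => (SL q m' + l q m'.+1)%N end.

Lemma SL_mono q i j : (i <= j)%N -> (SL q i <= SL q j)%N.
Proof.
elim: j => [|j IH]; first by rewrite leqn0 => /eqP ->.
rewrite leq_eqVlt => /orP [/eqP -> //| ]; rewrite ltnS => /IH H /=; lia.
Qed.

Lemma SL_lin q T K : (forall j, (T <= j)%N -> (l q j <= K)%N) ->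
  forall A, (SL q A <= SL q T + K * A)%N.
Proof.
move=> HK; elim => [|A IH] /=; first lia.
case: (leqP A.+1 T) => h.
  have := @SL_mono q _ _ h; rewrite /=; nia.
have := HK A.+1 (ltnW h); nia.
Qed.
Local Open Scope ring_scope.

Definition ind {R : realType} q F (g : R) k : nat :=
  ((0 <= yF R q F k) && (yF R q F k < g)).
Definition cnt {R : realType} q F (g : R) n : nat :=
  (\sum_(1 <= k < n.+1) ind q F g k)%N.
Definition Ecnt {R : realType} q F (g : R) n : R :=
  (cnt q F g n)%:R - n%:R * g.

Lemma ind_le1 {R : realType} q F (g : R) k : (ind q F g k <= 1)%N.
Proof. by rewrite /ind; case: (_ && _). Qed.

Lemma cnt_add {R : realType} q F (g : R) P c :
  cnt q F g (P + c) = (cnt q F g P + \sum_(i < c) ind q F g (P + i.+1))%N.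
Proof.
elim: c => [|c IH]; first by rewrite addn0 big_ord0 addn0.
rewrite big_ord_recr /= addnA -IH addnS /cnt big_nat_recr //=.
Qed.

Lemma sum_ind_le {R : realType} q F (g : R) P c :
  (\sum_(i < c) ind q F g (P + i.+1) <= c)%N.
Proof.
elim: c => [|c IH]; first by rewrite big_ord0.
by rewrite big_ord_recr /= -addn1 leq_add // ind_le1.
Qed.

Lemma E_partial {R : realType} q F (g : R) P c : 0 <= g <= 1 ->
  `|Ecnt q F g (P + c) - Ecnt q F g P| <= c%:R.
Proof.
case/andP => g0 g1.
rewrite /Ecnt cnt_add natrD natrD.
set S := (\sum_(i < c) _)%N.
have hS : (S <= c)%N by exact: sum_ind_le.
have hS' : (S%:R <= c%:R :> R) by rewrite ler_nat.
have hS0 : (0 <= S%:R :> R) by [].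
have c0 : (0 <= c%:R :> R) by [].
have : c%:R * g <= c%:R :> R by rewrite ler_piMr.
have : 0 <= c%:R * g :> R by rewrite mulr_ge0.
move=> h1 h2.
rewrite ler_norml; apply/andP; split.
  have -> : (cnt q F g P)%:R + S%:R - ((P%:R + c%:R) * g) - ((cnt q F g P)%:R - P%:R * g)
      = S%:R - c%:R * g :> R by ring.
  lra.
have -> : (cnt q F g P)%:R + S%:R - ((P%:R + c%:R) * g) - ((cnt q F g P)%:R - P%:R * g)
      = S%:R - c%:R * g :> R by ring.
lra.
Qed.
Definition Lc {R : realType} (m : nat) (x : R) : nat := (\sum_(i < m) (((i%:R < x)%R : bool) : nat))%N.

Lemma Lc_le {R : realType} m (x : R) : (Lc m x <= m)%N.
Proof.
elim: m => [|m IH]; first by rewrite /Lc big_ord0.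
by rewrite /Lc big_ord_recr /= -addn1 leq_add // leq_b1.
Qed.

Lemma Lc_upper {R : realType} m (x : R) : -1 <= x -> (Lc m x)%:R <= x + 1.
Proof.
move=> x1; elim: m => [|m IH]; first by rewrite /Lc big_ord0 /=; lra.
rewrite /Lc big_ord_recr /= natrD.
case: (boolP (m%:R < x)) => h /=.
  have := Lc_le m x; rewrite -(ler_nat R) /Lc => h2; lra.
rewrite addr0; exact: IH.
Qed.

Lemma Lc_lower {R : realType} m : forall (x y : R), y <= x -> y <= m%:R -> y <= (Lc m x)%:R.
Proof.
elim: m => [|m IH] x y yx ym; first by rewrite /Lc big_ord0.
rewrite /Lc big_ord_recr /= natrD.
case: (boolP (m%:R < x)) => h /=.
  have := IH x (y - 1) ltac:(lra) ltac:(rewrite -natr1 in ym; lra).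
  rewrite /Lc; lra.
rewrite addr0; apply: IH => //.
rewrite -natr1 in ym; rewrite real_ltNge ?num_real // in h; lra.
Qed.
Lemma w_bounds {R : realType} q F a b c : Q_special R q F -> inSQ q (a, b, c) ->
  0 <= yF R q F (phiQ q (a, b, c)) /\
  (c.-1)%:R - 2^-1 <= yF R q F (phiQ q (a, b, c)) * a%:R <= (c.-1)%:R + 2^-1.
Proof.
move=> HF HS.
have [h1 h2] := HF a b c HS.
have HS' := HS; case: HS' => a0 b0 c0 _ _.
rewrite /yF phiQ_invK //.
have A0 : 0 < a%:R :> R by rewrite ltr0n.
case: c c0 h1 h2 HS => [//|[|c]] _ h1 h2 HS.
  rewrite h1 //= mul0r mul0r; split => //; lra.
have := h2 erefl; rewrite /=.
move=> /andP [lo hi].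
set w := (F (a, b, c.+2))%:~R / _ in lo hi *.
have e1 : ((c.+1)%:R / a%:R - (2 * a%:R ^+ 2)^-1) * a%:R = (c.+1)%:R - (2 * a%:R)^-1 :> R.
  by field; rewrite gt_eqF.
have e2 : ((c.+1)%:R / a%:R + (2 * a%:R ^+ 2)^-1) * a%:R = (c.+1)%:R + (2 * a%:R)^-1 :> R.
  by field; rewrite gt_eqF.
have ia : (2 * a%:R)^-1 <= 2^-1 :> R.
  have p1 : (2 : R) \is Num.pos by rewrite posrE.
  have p2 : (2 * a%:R : R) \is Num.pos by rewrite posrE mulr_gt0.
  rewrite (lef_pV2 p2 p1).
  have : 1 <= a%:R :> R by rewrite ler1n.
  lra.
have ia0 : 0 < (2 * a%:R)^-1 :> R by rewrite invr_gt0 mulr_gt0.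
have lo' : (c.+1)%:R - (2 * a%:R)^-1 <= w * a%:R by move: lo; rewrite -(ler_pM2r A0) e1.
have hi' : w * a%:R <= (c.+1)%:R + (2 * a%:R)^-1 by move: hi; rewrite -(ler_pM2r A0) e2.
have c1 : 1 <= (c.+1)%:R :> R by rewrite ler1n.
split; last by apply/andP; split; lra.
have : 0 <= w * a%:R by lra.
by rewrite pmulr_lge0.
Qed.
Lemma E_block {R : realType} q F (g : R) a b : Q_special R q F ->
  (0 < a)%N -> (0 < b)%N -> (b <= l q a)%N -> 0 < g <= 1 ->
  `|Ecnt q F g (Lsum q a.-1 + b.-1 * a + a) - Ecnt q F g (Lsum q a.-1 + b.-1 * a)| <= 2.
Proof.
move=> HF a0 b0 bl /andP [g0 g1].
set P := (Lsum q a.-1 + b.-1 * a)%N.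
rewrite /Ecnt cnt_add natrD.
set S := (\sum_(i < a) _)%N.
have A0 : 0 < a%:R :> R by rewrite ltr0n.
have key : forall i : 'I_a, 0 <= yF R q F (P + i.+1) /\
    i%:R - 2^-1 <= yF R q F (P + i.+1) * a%:R <= i%:R + 2^-1.
  move=> i.
  have HS : inSQ q (a, b, i.+1) by split => //; exact: ltn_ord.
  have -> : (P + i.+1)%N = phiQ q (a, b, i.+1) by [].
  exact: w_bounds.
have lo : (Lc a (a%:R * g - 2^-1) <= S)%N.
  rewrite /Lc /S; apply: leq_sum => i _.
  case: (boolP (i%:R < _)) => //= h.
  have [w0 /andP [_ whi]] := key i.
  rewrite /ind w0 /=.
  have : yF R q F (P + i.+1) * a%:R < a%:R * g by lra.
  by rewrite (mulrC a%:R g) ltr_pM2r // => ->.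
have hi : (S <= Lc a (a%:R * g + 2^-1))%N.
  rewrite /Lc /S; apply: leq_sum => i _.
  rewrite /ind; case: (boolP (_ && _)) => //= /andP [_ h].
  have [_ /andP [wlo _]] := key i.
  have : yF R q F (P + i.+1) * a%:R < g * a%:R by rewrite ltr_pM2r.
  rewrite (mulrC g) => h2.
  suff -> : (i%:R < a%:R * g + 2^-1) = true by [].
  apply/idP; lra.
have L1 := @Lc_upper R a (a%:R * g + 2^-1).
have L2 := @Lc_lower R a (a%:R * g - 2^-1) (a%:R * g - 2^-1) (lexx _).
have ag : a%:R * g <= a%:R :> R by rewrite ler_piMr // ltW.
have ag0 : 0 <= a%:R * g :> R by rewrite mulr_ge0 // ltW.
have L2' := L2 ltac:(lra).
have L1' := L1 ltac:(lra).
move: lo hi; rewrite -!(ler_nat R) => lo hi.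
rewrite ler_norml; apply/andP; split; lra.
Qed.
Lemma E_inner {R : realType} q F (g : R) a : Q_special R q F -> 0 < g <= 1 ->
  `|Ecnt q F g (Lsum q a)| <= 2 * (SL q a)%:R ->
  forall b, (b <= l q a.+1)%N ->
  `|Ecnt q F g (Lsum q a + b * a.+1)| <= 2 * (SL q a + b)%:R.
Proof.
move=> HF hg IH; elim => [|b IHb] hb; first by rewrite mul0n addn0 addn0.
have hb' := ltnW hb.
have B := @E_block R q F g a.+1 b.+1 HF erefl erefl hb hg.
rewrite /= in B.
have -> : (Lsum q a + b.+1 * a.+1 = Lsum q a + b * a.+1 + a.+1)%N by rewrite mulSn; lia.
have := IHb hb'.
move: B; set x := Ecnt _ _ _ _; set y := Ecnt _ _ _ _ => B H.
have := ler_normD (x - y) y; rewrite subrK.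
rewrite -addn1 !natrD => h; lra.
Qed.
Lemma E_Lsum {R : realType} q F (g : R) : Q_special R q F -> 0 < g <= 1 ->
  forall a, `|Ecnt q F g (Lsum q a)| <= 2 * (SL q a)%:R.
Proof.
move=> HF hg; elim => [|a IH].
  have -> : Lsum q 0 = 0%N by [].
  by rewrite /Ecnt /cnt big_geq // mul0r subr0 normr0 /= mulr0.
have := @E_inner R q F g a HF hg IH _ (leqnn _).
have -> : (Lsum q a + l q a.+1 * a.+1 = Lsum q a.+1)%N by rewrite LsumS mulnC.
by [].
Qed.

Lemma E_final {R : realType} q F (g : R) A B C : Q_special R q F -> 0 < g <= 1 ->
  inSQ q (A, B, C) ->
  `|Ecnt q F g (phiQ q (A, B, C))| <= 2 * (SL q A)%:R + A%:R.
Proof.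
move=> HF hg HS; have HS' := HS.
case: HS' => a0 b0 c0 bl ca.
case: A a0 bl ca HS => [//|a] _ bl ca HS.
have hg' : 0 <= g <= 1 by case/andP: hg => g0 g1; rewrite ltW.
have H1 := @E_inner R q F g a HF hg (@E_Lsum R q F g HF hg a) B.-1 ltac:(lia).
have H2 := @E_partial R q F g (Lsum q a + B.-1 * a.+1) C hg'.
rewrite /=.
move: H1 H2; set x := Ecnt _ _ _ _; set y := Ecnt _ _ _ _ => H1 H2.
have := ler_normD (y - x) x; rewrite subrK => h.
have e : (SL q a.+1 = SL q a + l q a.+1)%N by [].
rewrite -e.
have : (SL q a + B.-1 < SL q a.+1)%N by rewrite e; lia.
rewrite -(ltr_nat R) => h3.
have : (C%:R <= a.+1%:R :> R) by rewrite ler_nat.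
lra.
Qed.
Lemma nat_of_int_ge {R : realType} (x : R) : exists T : nat, x < T%:R.
Proof.
exists (`|Num.ceil x|%N).+1.
have h1 := ceil_ge x.
have h2 : (Num.ceil x)%:~R <= `|Num.ceil x|%:~R :> R by rewrite ler_int ler_norm.
rewrite -natr_absz in h2.
rewrite -natr1; lra.
Qed.

Theorem mainTheorem5 (R : realType) (q : nat -> nat) (M t : R) :
  basic_seq q -> infinite_in_limit q ->
  (forall i : nat, (0 < i)%N -> t < i%:R ->
     (nu q i.+1)%:R - (nu q i)%:R <= M * i%:R) ->
  forall (F : nat * nat * nat -> int), Q_special R q F ->
  forall psi : R, 1 < psi ->
  exists N : nat, forall n : nat, (N <= n)%N ->
    star_discrepancy (yF R q F) n <
      psi * Num.sqrt (2 * (Num.ceil (M + 1))%:~R)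
          * (2 * (Num.ceil (M + 1))%:~R + 1) * (Num.sqrt n%:R)^-1.
Proof.
move=> _ _ Hnu F HF psi psi1.
have [T1 hT1] := nat_of_int_ge t.
set T0 := (T1 + 2)%N.
have hT0 : forall j, (T0 <= j)%N -> (0 < j)%N /\ t < j%:R.
  move=> j hj; split; first lia.
  have : (T1%:R <= j%:R :> R) by rewrite ler_nat; lia.
  lra.
have M0 : 0 <= M.
  rewrite leNgt; apply/negP => Mneg.
  have dec : forall j, (T0 <= j)%N -> (nu q j.+1 < nu q j)%N.
    move=> j hj; have [j0 tj] := hT0 j hj.
    have := Hnu j j0 tj.
    have : M * j%:R < 0 by rewrite nmulr_rlt0 // ltr0n.
    move=> h1 h2; rewrite -(ltr_nat R); lra.
  have : forall m, (nu q (T0 + m) + m <= nu q T0)%N.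
    elim => [|m IH]; first by rewrite addn0 addn0.
    have := dec (T0 + m)%N (leq_addr _ _); rewrite (addnS T0 m); lia.
  move/(_ (nu q T0).+1); lia.
set K := `|Num.ceil (M + 1)|%N.
have eK : (Num.ceil (M + 1))%:~R = K%:R :> R.
  rewrite /K natr_absz ger0_norm // ceil_ge0; lra.
rewrite eK.
have KM : M + 1 <= K%:R by rewrite -eK ceil_ge.
have K1 : (1 <= K)%N by rewrite -(ler_nat R); lra.
have lK : forall j, (T0 <= j)%N -> (l q j <= K)%N.
  move=> j hj; have [j0 tj] := hT0 j hj.
  apply: l_bound => //; first lia.
  rewrite -(ler_nat R) natrD natrM.
  have := Hnu j j0 tj.
  have : M * j%:R <= j%:R * K%:R.
    rewrite mulrC ler_pM2l ?ltr0n //; lra.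
  lra.
have SLb := @SL_lin q T0 K lK.
set C0 := SL q T0.
set X : R := 2 * K%:R + 1.
have X0 : 0 < X by rewrite /X; have : (0 <= K%:R :> R) by []; lra.
have [A0 hA0] := nat_of_int_ge ((2 * C0%:R + psi * X) / ((psi - 1) * X)).
exists (Lsum q A0).+1 => n hn.
have n0 : (0 < n)%N by lia.
have [A [B [C [HS En]]]] := @decomp q n n0.
have [rlo rhi] : (Lsum q A.-1 < n)%N /\ (n <= Lsum q A)%N.
  by have := @phiQ_range q _ _ _ HS; rewrite -En => /andP.
have AA0 : (A0 < A)%N.
  rewrite ltnNge; apply/negP => h; have := @Lsum_mono q _ _ h; lia.
set Y : R := 2 * (SL q A)%:R + A%:R.
have nR : 0 < n%:R :> R by rewrite ltr0n.
have Dle : star_discrepancy (yF R q F) n <= Y / n%:R.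
  rewrite /star_discrepancy; apply: ge_sup.
    exists `| (\sum_(1 <= k < n.+1) (((0 <= yF R q F k)%R && (yF R q F k < 1)%R) : nat))%:R / n%:R - 1|.
    exists 1 => //; lra.
  move=> r [g /andP [g0 g1] ->].
  have hg : 0 < g <= 1 by rewrite g0 g1.
  have E := @E_final R q F g A B C HF hg HS.
  rewrite -En in E.
  have -> : (\sum_(1 <= k < n.+1) (((0 <= yF R q F k)%R && (yF R q F k < g)%R) : nat))%:R / n%:R - g
      = Ecnt q F g n / n%:R.
    rewrite /Ecnt /cnt /ind; field; rewrite gt_eqF //.
  by rewrite normrM normfV (gtr0_norm nR) ler_pM2r ?invr_gt0.
apply: (le_lt_trans Dle).
have SLA : (SL q A)%:R <= C0%:R + K%:R * A%:R :> R.
  by rewrite -natrM -natrD ler_nat.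
have eXA : X * A%:R = 2 * (K%:R * A%:R) + A%:R by rewrite /X; ring.
have YX : Y <= 2 * C0%:R + X * A%:R by rewrite /Y; lra.
have PX : 0 < (psi - 1) * X by rewrite mulr_gt0 // subr_gt0.
have hA : 2 * C0%:R + psi * X < (psi - 1) * X * A%:R.
  have : A0%:R <= A%:R :> R by rewrite ler_nat ltnW.
  move: hA0; rewrite ltr_pdivrMr // => h1 h2.
  have : A0%:R * ((psi - 1) * X) <= A%:R * ((psi - 1) * X) by rewrite ler_pM2r.
  rewrite (mulrC A%:R); lra.
set s := Num.sqrt n%:R.
have s0 : 0 < s by rewrite sqrtr_gt0.
have ns : n%:R = s * s by rewrite -expr2 sqr_sqrtr ?ler0n.
have A1 : (0 < A)%N := leq_ltn_trans (leq0n A0) AA0.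
have sq : A.-1%:R <= Num.sqrt (2 * K%:R) * s.
  rewrite -sqrtrM ?mulr_ge0 ?ler0n //.
  have : (A.-1 * A.-1 <= 2 * K * n)%N.
    have h1 := Lsum_quad q A.-1.
    have h2 : (A.-1 * A.-1 <= A.-1 * A.-1.+1)%N := leq_mul (leqnn _) (leqnSn _).
    have h3 : (2 * n <= 2 * K * n)%N by rewrite mulnAC leq_pmulr.
    apply: (leq_trans h2); apply: (leq_trans h1); apply: leq_trans h3.
    by rewrite leq_mul2l ltnW.
  rewrite -(ler_nat R) !natrM => h.
  rewrite -[X in X <= _](@ger0_norm _ A.-1%:R) // -sqrtr_sqr ler_sqrt ?mulr_ge0 ?ler0n //.
have eA : A.-1%:R = A%:R - 1 :> R by rewrite -{2}(prednK A1) -natr1 addrK.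
have main : Y < psi * Num.sqrt (2 * K%:R) * X * s.
  have -> : psi * Num.sqrt (2 * K%:R) * X * s = (psi * X) * (Num.sqrt (2 * K%:R) * s) by ring.
  have pX : 0 < psi * X by rewrite mulr_gt0 //; lra.
  have : (psi * X) * A.-1%:R <= (psi * X) * (Num.sqrt (2 * K%:R) * s) by rewrite ler_pM2l.
  rewrite eA; lra.
rewrite ns invfM mulrA ltr_pM2r ?invr_gt0 //.
by rewrite ltr_pdivrMr.
Qed.
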